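(* Let $X_r$ be a Dynkin diagram of finite type and let the spectral parameter domain $U$ be either $\mathbb{C}$ or $\mathbb{C}_\xi$. Then: (1) there is a ring homomorphism $\varphi:\mathcal{Y}(X_r)\to\mathcal{T}(X_r)$ with $\varphi(Y^{(a)}_m(u))=\dfrac{M^{(a)}_m(u)}{T^{(a)}_{m-1}(u)T^{(a)}_{m+1}(u)}$ for all $a\in I$, $m\in\mathbb{N}$, $u\in U$ (with $T^{(a)}_0(u)=1$); (2) there is a ring homomorphism $\psi:\mathcal{T}(X_r)\to\mathcal{Y}(X_r)$ such that $\psi\circ\varphi=\mathrm{id}_{\mathcal{Y}(X_r)}$; (3) $\mathcal{Y}(X_r)$ is isomorphic to a subring and to a quotient ring of $\mathcal{T}(X_r)$.
   Context: Rings are commutative with identity; $\mathbb{N}=\{1,2,\dots\}$. $\mathbb{C}_\xi:=\mathbb{C}/(2\pi\sqrt{-1}/\xi)\mathbb{Z}$ for some $\xi\in\mathbb{C}\setminus2\pi\sqrt{-1}\mathbb{Q}$. Enumeration of $I=\{1,\dots,r\}$: $A_r$: chain $1-\cdots-r$; $B_r$: chain with double bond between $r-1,r$, $\alpha_r$ short; $C_r$: same chain, $\alpha_r$ long, others short; $D_r$: chain $1-\cdots-(r-2)$, with $r-1,r$ joined to $r-2$; $E_6$: chain $1-2-3-5-6$, $4$ joined to $3$; $E_7$: chain $1-\cdots-6$, $7$ joined to $3$; $E_8$: chain $1-\cdots-7$, $8$ joined to $5$; $F_4$: chain $1-2-3-4$, double bond between $2,3$, $\alpha_1,\alpha_2$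 long; $G_2$: $\alpha_1$ long, $\alpha_2$ short. $C=(C_{ab})$ the Cartan matrix. $t_a=2$ for short $a$ in $B_r,C_r,F_4$, $t_a=3$ for $a=2$ in $G_2$, $t_a=1$ otherwise. $\mathcal{T}(X_r)$: ring with generators $T^{(a)}_m(u)^{\pm1}$ ($a\in I,m\in\mathbb{N},u\in U$) and relations $T^{(a)}_m(u-\tfrac1{t_a})T^{(a)}_m(u+\tfrac1{t_a})=T^{(a)}_{m-1}(u)T^{(a)}_{m+1}(u)+M^{(a)}_m(u)$ ($T^{(0)}_m=T^{(a)}_0=1$), with: simply laced: $M^{(a)}_m(u)=\prod_{b:C_{ab}=-1}T^{(b)}_m(u)$; $B_r$: $M^{(a)}_m=T^{(a-1)}_m(u)T^{(a+1)}_m(u)$ ($a\le r-2$), $M^{(r-1)}_m=T^{(r-2)}_m(u)T^{(r)}_{2m}(u)$, $M^{(r)}_{2m}=T^{(r-1)}_m(u-\frac12)T^{(r-1)}_m(u+\frac12)$, $M^{(r)}_{2m+1}=T^{(r-1)}_m(u)T^{(r-1)}_{m+1}(u)$; $C_r$: $M^{(a)}_m=T^{(a-1)}_m(u)T^{(a+1)}_m(u)$ ($a\le r-2$), $M^{(r-1)}_{2m}=T^{(r-2)}_{2m}(u)T^{(r)}_m(u-\frac12)T^{(r)}_m(u+\frac12)$, $M^{(r-1)}_{2m+1}=T^{(r-2)}_{2m+1}(u)T^{(r)}_m(u)T^{(r)}_{m+1}(u)$, $M^{(r)}_m=T^{(r-1)}_{2m}(u)$; $F_4$: $M^{(1)}_m=T^{(2)}_m(u)$,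 $M^{(2)}_m=T^{(1)}_m(u)T^{(3)}_{2m}(u)$, $M^{(3)}_{2m}=T^{(2)}_m(u-\frac12)T^{(2)}_m(u+\frac12)T^{(4)}_{2m}(u)$, $M^{(3)}_{2m+1}=T^{(2)}_m(u)T^{(2)}_{m+1}(u)T^{(4)}_{2m+1}(u)$, $M^{(4)}_m=T^{(3)}_m(u)$; $G_2$: $M^{(1)}_m=T^{(2)}_{3m}(u)$, $M^{(2)}_{3m}=T^{(1)}_m(u-\frac23)T^{(1)}_m(u)T^{(1)}_m(u+\frac23)$, $M^{(2)}_{3m+1}=T^{(1)}_m(u-\frac13)T^{(1)}_m(u+\frac13)T^{(1)}_{m+1}(u)$, $M^{(2)}_{3m+2}=T^{(1)}_m(u)T^{(1)}_{m+1}(u-\frac13)T^{(1)}_{m+1}(u+\frac13)$. $\mathcal{Y}(X_r)$: ring with generators $Y^{(a)}_m(u)^{\pm1}$, $(1+Y^{(a)}_m(u))^{-1}$ ($a\in I,m\in\mathbb{N},u\in U$) and relations $Y^{(a)}_m(u-\tfrac1{t_a})Y^{(a)}_m(u+\tfrac1{t_a})=\dfrac{N^{(a)}_m(u)}{(1+Y^{(a)}_{m-1}(u)^{-1})(1+Y^{(a)}_{m+1}(u)^{-1})}$, with $Y^{(0)}_m=0$, $Y^{(a)}_0(u)^{-1}=0$, where: simply laced: $N^{(a)}_m=\prod_{b:C_{ab}=-1}(1+Y^{(b)}_m(u))$; $B_r$: $N^{(a)}_m=(1+Y^{(a-1)}_m(u))(1+Y^{(a+1)}_m(u))$ ($a\le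 r-2$), $N^{(r-1)}_m=(1+Y^{(r-2)}_m(u))(1+Y^{(r)}_{2m-1}(u))(1+Y^{(r)}_{2m+1}(u))(1+Y^{(r)}_{2m}(u-\frac12))(1+Y^{(r)}_{2m}(u+\frac12))$, $N^{(r)}_{2m}=1+Y^{(r-1)}_m(u)$, $N^{(r)}_{2m+1}=1$; $C_r$: $N^{(a)}_m=(1+Y^{(a-1)}_m(u))(1+Y^{(a+1)}_m(u))$ ($a\le r-2$), $N^{(r-1)}_{2m}=(1+Y^{(r-2)}_{2m}(u))(1+Y^{(r)}_m(u))$, $N^{(r-1)}_{2m+1}=1+Y^{(r-2)}_{2m+1}(u)$, $N^{(r)}_m=(1+Y^{(r-1)}_{2m-1}(u))(1+Y^{(r-1)}_{2m+1}(u))(1+Y^{(r-1)}_{2m}(u-\frac12))(1+Y^{(r-1)}_{2m}(u+\frac12))$; $F_4$: $N^{(1)}_m=1+Y^{(2)}_m(u)$, $N^{(2)}_m=(1+Y^{(1)}_m(u))(1+Y^{(3)}_{2m-1}(u))(1+Y^{(3)}_{2m+1}(u))(1+Y^{(3)}_{2m}(u-\frac12))(1+Y^{(3)}_{2m}(u+\frac12))$, $N^{(3)}_{2m}=(1+Y^{(2)}_m(u))(1+Y^{(4)}_{2m}(u))$, $N^{(3)}_{2m+1}=1+Y^{(4)}_{2m+1}(u)$, $N^{(4)}_m=1+Y^{(3)}_m(u)$; $G_2$: $N^{(1)}_m=(1+Y^{(2)}_{3m-2}(u))(1+Y^{(2)}_{3m+2}(u))(1+Y^{(2)}_{3m}(u))\prod_{\epsilon=\pm1}(1+Y^{(2)}_{3m-1}(u+\frac{\epsilon}3))(1+Y^{(2)}_{3m+1}(u+\frac{\epsilon}3))(1+Y^{(2)}_{3m}(u+\frac{2\epsilon}3))$,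 $N^{(2)}_{3m}=1+Y^{(1)}_m(u)$, $N^{(2)}_{3m+1}=N^{(2)}_{3m+2}=1$. *)

(* Defs.v *)
From HB Require Import structures.
From mathcomp Require Import all_boot all_order all_algebra.
From mathcomp Require Import complex.
From mathcomp Require Import reals trigo.

Set Implicit Arguments.
Unset Strict Implicit.
Unset Printing Implicit Defensive.

Import Order.TTheory GRing.Theory Num.Theory.
Local Open Scope ring_scope.

Inductive dynkin :=
  TA of nat | TB of nat | TC of nat | TD of nat | TE6 | TE7 | TE8 | TF4 | TG2.

Definition dynkin_valid (X : dynkin) : bool :=
  match X with
  | TA r => (1 <= r)%N
  | TB r => (2 <= r)%N
  | TC r => (2 <= r)%N
  | TD r => (4 <= r)%N
  | _ => true
  end.

Definition rank (X : dynkin) : nat :=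
  match X with
  | TA r | TB r | TC r | TD r => r
  | TE6 => 6 | TE7 => 7 | TE8 => 8 | TF4 => 4 | TG2 => 2
  end.

(* edges of the simply laced diagrams, with the enumeration of the paper *)
Definition chain (n : nat) : seq (nat * nat) := [seq (i, i.+1) | i <- iota 1 n.-1].

Definition sl_edges (X : dynkin) : seq (nat * nat) :=
  match X with
  | TA r => chain r
  | TD r => chain (r - 2)%N ++ [:: (r - 2, r - 1); (r - 2, r)]%N
  | TE6 => [:: (1, 2); (2, 3); (3, 5); (5, 6); (3, 4)]%N
  | TE7 => chain 6 ++ [:: (3, 7)%N]
  | TE8 => chain 7 ++ [:: (5, 8)%N]
  | _ => [::]
  end.

(* C_{ab} = -1 in a simply laced diagram *)
Definition adj (X : dynkin) (a b : nat) : bool :=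
  ((a, b) \in sl_edges X) || ((b, a) \in sl_edges X).

Definition tnum (X : dynkin) (a : nat) : nat :=
  match X with
  | TB r => if a == r then 2 else 1
  | TC r => if (a < r)%N then 2 else 1
  | TF4 => if (3 <= a)%N then 2 else 1
  | TG2 => if a == 2 then 3 else 1
  | _ => 1
  end%N.

Definition in_I (X : dynkin) (a : nat) : bool := (1 <= a <= rank X)%N.

(* U = C  (None)  or  U = C_xi = C / (2 pi i / xi) Z  (Some xi).  Functions on
   U are encoded as functions on C invariant under translation by [period]. *)
Section Spectral.
Variable R : realType.

Definition spectral_ok (xi : option R[i]) : Prop :=
  match xi with
  | None => True
  | Some x => forall q : rat, x <> Complex 0 (2 * pi * ratr q)
  end.

Definition period (xi : option R[i]) : R[i] :=
  match xi with
  | None => 0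
  | Some x => Complex 0 (2 * pi) / x
  end.

Definition shift (n : nat) : R[i] := (n%:R)^-1.

End Spectral.

Section TSystem.
Variables (R : realType) (S : comUnitRingType).
Local Notation C := R[i].

Definition Tx (T : nat -> nat -> C -> S) (a m : nat) (u : C) : S :=
  if (a == 0)%N || (m == 0)%N then 1 else T a m u.

Definition Mfun (X : dynkin) (T : nat -> nat -> C -> S) (a m : nat) (u : C) : S :=
  let h := shift R 2 in
  let th := shift R 3 in
  match X with
  | TB r =>
      if (a <= r - 2)%N then Tx T a.-1 m u * Tx T a.+1 m u
      else if a == (r - 1)%N then Tx T (r - 2)%N m u * Tx T r m.*2 u
      else if odd m then Tx T (r - 1)%N m./2 u * Tx T (r - 1)%N m./2.+1 u
      else Tx T (r - 1)%N m./2 (u - h) * Tx T (r - 1)%N m./2 (u + h)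
  | TC r =>
      if (a <= r - 2)%N then Tx T a.-1 m u * Tx T a.+1 m u
      else if a == (r - 1)%N then
        (if odd m then Tx T (r - 2)%N m u * Tx T r m./2 u * Tx T r m./2.+1 u
         else Tx T (r - 2)%N m u * Tx T r m./2 (u - h) * Tx T r m./2 (u + h))
      else Tx T (r - 1)%N m.*2 u
  | TF4 =>
      if a == 1%N then Tx T 2 m u
      else if a == 2%N then Tx T 1 m u * Tx T 3 m.*2 u
      else if a == 3%N then
        (if odd m then Tx T 2 m./2 u * Tx T 2 m./2.+1 u * Tx T 4 m u
         else Tx T 2 m./2 (u - h) * Tx T 2 m./2 (u + h) * Tx T 4 m u)
      else Tx T 3 m u
  | TG2 =>
      if a == 1%N then Tx T 2 (3 * m)%N u
      else
        let k := (m %/ 3)%N in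
        if ((m %% 3)%N == 0%N) then
          Tx T 1 k (u - th *+ 2) * Tx T 1 k u * Tx T 1 k (u + th *+ 2)
        else if ((m %% 3)%N == 1%N) then
          Tx T 1 k (u - th) * Tx T 1 k (u + th) * Tx T 1 k.+1 u
        else Tx T 1 k u * Tx T 1 k.+1 (u - th) * Tx T 1 k.+1 (u + th)
  | _ => \prod_(b <- iota 1 (rank X) | adj X a b) Tx T b m u
  end.

Definition T_rel (X : dynkin) (per : C) (T : nat -> nat -> C -> S) : Prop :=
  [/\ forall a m u, in_I X a -> (0 < m)%N -> T a m u \is a GRing.unit,
      forall a m u, in_I X a -> (0 < m)%N -> T a m (u + per) = T a m u &
      forall a m u, in_I X a -> (0 < m)%N ->
        T a m (u - shift R (tnum X a)) * T a m (u + shift R (tnum X a))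
        = Tx T a m.-1 u * Tx T a m.+1 u + Mfun X T a m u].

End TSystem.

Section YSystem.
Variables (R : realType) (S : comUnitRingType).
Local Notation C := R[i].

Definition Yx (Y : nat -> nat -> C -> S) (a m : nat) (u : C) : S :=
  if (a == 0)%N then 0 else Y a m u.

Definition Yinvx (Y : nat -> nat -> C -> S) (a m : nat) (u : C) : S :=
  if (m == 0)%N then 0 else (Y a m u)^-1.

Definition Nfun (X : dynkin) (Y : nat -> nat -> C -> S) (a m : nat) (u : C) : S :=
  let h := shift R 2 in
  let th := shift R 3 in
  let P b k v := 1 + Yx Y b k v in
  match X with
  | TB r =>
      if (a <= r - 2)%N then P a.-1 m u * P a.+1 m u
      else if a == (r - 1)%N then
        P (r - 2)%N m u * P r m.*2.-1 u * P r m.*2.+1 u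
          * P r m.*2 (u - h) * P r m.*2 (u + h)
      else if odd m then 1 else P (r - 1)%N m./2 u
  | TC r =>
      if (a <= r - 2)%N then P a.-1 m u * P a.+1 m u
      else if a == (r - 1)%N then
        (if odd m then P (r - 2)%N m u else P (r - 2)%N m u * P r m./2 u)
      else P (r - 1)%N m.*2.-1 u * P (r - 1)%N m.*2.+1 u
             * P (r - 1)%N m.*2 (u - h) * P (r - 1)%N m.*2 (u + h)
  | TF4 =>
      if a == 1%N then P 2 m u
      else if a == 2%N then
        P 1 m u * P 3 m.*2.-1 u * P 3 m.*2.+1 u * P 3 m.*2 (u - h) * P 3 m.*2 (u + h)
      else if a == 3%N then
        (if odd m then P 4 m u else P 2 m./2 u * P 4 m u)
      else P 3 m u
  | TG2 =>
      if a == 1%N then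
        P 2 (3 * m - 2)%N u * P 2 (3 * m + 2)%N u * P 2 (3 * m)%N u
        * (P 2 (3 * m - 1)%N (u + th) * P 2 (3 * m + 1)%N (u + th) * P 2 (3 * m)%N (u + th *+ 2))
        * (P 2 (3 * m - 1)%N (u - th) * P 2 (3 * m + 1)%N (u - th) * P 2 (3 * m)%N (u - th *+ 2))
      else if ((m %% 3)%N == 0%N) then P 1 (m %/ 3)%N u else 1
  | _ => \prod_(b <- iota 1 (rank X) | adj X a b) P b m u
  end.

(* the relations of Y(X_r), with U encoded through [per];
   generators Y^{±1} and (1+Y)^{-1}: Y and 1+Y are units *)
Definition Y_rel (X : dynkin) (per : C) (Y : nat -> nat -> C -> S) : Prop :=
  [/\ forall a m u, in_I X a -> (0 < m)%N -> Y a m u \is a GRing.unit,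
      forall a m u, in_I X a -> (0 < m)%N -> 1 + Y a m u \is a GRing.unit,
      forall a m u, in_I X a -> (0 < m)%N -> Y a m (u + per) = Y a m u &
      forall a m u, in_I X a -> (0 < m)%N ->
        Y a m (u - shift R (tnum X a)) * Y a m (u + shift R (tnum X a))
        = Nfun X Y a m u / ((1 + Yinvx Y a m.-1 u) * (1 + Yinvx Y a m.+1 u))].

End YSystem.

(* (RT, T) is the ring T(X_r): the generators satisfy the relations, and
   (RT, T) is initial: for any commutative ring S with a family satisfying
   the relations there is a unique ring morphism sending generators to it. *)
Definition T_presented (R : realType) (X : dynkin) (per : R[i])
    (RT : comUnitRingType) (T : nat -> nat -> R[i] -> RT) : Prop :=
  T_rel X per T /\
  forall (S : comUnitRingType) (t : nat -> nat -> R[i] -> S), T_rel X per t ->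
    exists f : {rmorphism RT -> S},
      (forall a m u, in_I X a -> (0 < m)%N -> f (T a m u) = t a m u) /\
      forall g : {rmorphism RT -> S},
        (forall a m u, in_I X a -> (0 < m)%N -> g (T a m u) = t a m u) ->
        g =1 f.

Definition Y_presented (R : realType) (X : dynkin) (per : R[i])
    (RY : comUnitRingType) (Y : nat -> nat -> R[i] -> RY) : Prop :=
  Y_rel X per Y /\
  forall (S : comUnitRingType) (y : nat -> nat -> R[i] -> S), Y_rel X per y ->
    exists f : {rmorphism RY -> S},
      (forall a m u, in_I X a -> (0 < m)%N -> f (Y a m u) = y a m u) /\
      forall g : {rmorphism RY -> S},
        (forall a m u, in_I X a -> (0 < m)%N -> g (Y a m u) = y a m u) ->
        g =1 f.

(* Main.v *)
Require Import Defs.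
From HB Require Import structures.
From mathcomp Require Import all_boot all_order all_algebra.
From mathcomp Require Import complex.
From mathcomp Require Import reals trigo.
Import GRing.Theory.
Local Open Scope ring_scope.
From mathcomp Require Import zify ring lra.
From Stdlib Require Import ClassicalEpsilon FunctionalExtensionality PropExtensionality.
Import Num.Theory.

Set Implicit Arguments.
Unset Strict Implicit.
Unset Printing Implicit Defensive.


Section Lists.
Variable R : realType.
Local Notation C := R[i].
Local Notation h := (shift R 2).
Local Notation th := (shift R 3).

Definition ent (b k : nat) (d : C) : nat * nat * C := (b, k, d).

Definition ML (X : dynkin) (a m : nat) : seq (nat * nat * C) :=
  match X with
  | TB r =>
      if (a <= r - 2)%N then [:: ent a.-1 m 0; ent a.+1 m 0]
      else if a == (r - 1)%N then [:: ent (r-2) m 0; ent r m.*2 0]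
      else if odd m then [:: ent (r-1) m./2 0; ent (r-1) m./2.+1 0]
      else [:: ent (r-1) m./2 (-h); ent (r-1) m./2 h]
  | TC r =>
      if (a <= r - 2)%N then [:: ent a.-1 m 0; ent a.+1 m 0]
      else if a == (r - 1)%N then
        (if odd m then [:: ent (r-2) m 0; ent r m./2 0; ent r m./2.+1 0]
         else [:: ent (r-2) m 0; ent r m./2 (-h); ent r m./2 h])
      else [:: ent (r-1) m.*2 0]
  | TF4 =>
      if a == 1%N then [:: ent 2 m 0]
      else if a == 2%N then [:: ent 1 m 0; ent 3 m.*2 0]
      else if a == 3%N then
        (if odd m then [:: ent 2 m./2 0; ent 2 m./2.+1 0; ent 4 m 0]
         else [:: ent 2 m./2 (-h); ent 2 m./2 h; ent 4 m 0])
      else [:: ent 3 m 0]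
  | TG2 =>
      if a == 1%N then [:: ent 2 (3 * m) 0]
      else
        let k := (m %/ 3)%N in
        if ((m %% 3)%N == 0%N) then [:: ent 1 k (- (th *+ 2)); ent 1 k 0; ent 1 k (th *+ 2)]
        else if ((m %% 3)%N == 1%N) then [:: ent 1 k (-th); ent 1 k th; ent 1 k.+1 0]
        else [:: ent 1 k 0; ent 1 k.+1 (-th); ent 1 k.+1 th]
  | _ => [seq ent b m 0 | b <- iota 1 (rank X) & adj X a b]
  end.

Definition NL (X : dynkin) (a m : nat) : seq (nat * nat * C) :=
  match X with
  | TB r =>
      if (a <= r - 2)%N then [:: ent a.-1 m 0; ent a.+1 m 0]
      else if a == (r - 1)%N then
        [:: ent (r-2) m 0; ent r m.*2.-1 0; ent r m.*2.+1 0; ent r m.*2 (-h); ent r m.*2 h]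
      else if odd m then [::] else [:: ent (r-1) m./2 0]
  | TC r =>
      if (a <= r - 2)%N then [:: ent a.-1 m 0; ent a.+1 m 0]
      else if a == (r - 1)%N then
        (if odd m then [:: ent (r-2) m 0] else [:: ent (r-2) m 0; ent r m./2 0])
      else [:: ent (r-1) m.*2.-1 0; ent (r-1) m.*2.+1 0; ent (r-1) m.*2 (-h); ent (r-1) m.*2 h]
  | TF4 =>
      if a == 1%N then [:: ent 2 m 0]
      else if a == 2%N then
        [:: ent 1 m 0; ent 3 m.*2.-1 0; ent 3 m.*2.+1 0; ent 3 m.*2 (-h); ent 3 m.*2 h]
      else if a == 3%N then
        (if odd m then [:: ent 4 m 0] else [:: ent 2 m./2 0; ent 4 m 0])
      else [:: ent 3 m 0]
  | TG2 =>
      if a == 1%N then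
        [:: ent 2 (3 * m - 2) 0; ent 2 (3 * m + 2) 0; ent 2 (3 * m) 0;
            ent 2 (3 * m - 1) th; ent 2 (3 * m + 1) th; ent 2 (3 * m) (th *+ 2);
            ent 2 (3 * m - 1) (-th); ent 2 (3 * m + 1) (-th); ent 2 (3 * m) (-(th *+ 2))]
      else if ((m %% 3)%N == 0%N) then [:: ent 1 (m %/ 3) 0] else [::]
  | _ => [seq ent b m 0 | b <- iota 1 (rank X) & adj X a b]
  end.

Variable S : comUnitRingType.

Lemma Mfun_ML X (T : nat -> nat -> C -> S) a m u :
  Mfun X T a m u = \prod_(x <- ML X a m) Tx T x.1.1 x.1.2 (u + x.2).
Proof.
case: X => [r|r|r|r| | | | |];
  try (rewrite /Mfun /ML big_map big_filter; apply: eq_bigr => b _; by rewrite addr0);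
  rewrite /Mfun /ML; cbv beta iota zeta;
  repeat (case: ifP => _); rewrite !big_cons big_nil /= ?addr0 ?mulr1 ?mulrA //.
Qed.

Lemma Nfun_NL X (Y : nat -> nat -> C -> S) a m u :
  Nfun X Y a m u = \prod_(x <- NL X a m) (1 + Yx Y x.1.1 x.1.2 (u + x.2)).
Proof.
case: X => [r|r|r|r| | | | |];
  try (rewrite /Nfun /NL big_map big_filter; apply: eq_bigr => b _; by rewrite addr0);
  rewrite /Nfun /NL; cbv beta iota zeta;
  repeat (case: ifP => _); rewrite ?big_cons ?big_nil /= ?addr0 ?mulr1 ?mulrA //.
Qed.

Definition tmax (X : dynkin) : nat :=
  match X with TB _ | TC _ | TF4 => 2 | TG2 => 3 | _ => 1 end%N.
Definition wl (X : dynkin) (a m : nat) : nat := (m * (tmax X %/ tnum X a))%N.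
Definition lev2 (X : dynkin) (a m : nat) : nat :=
  match X with
  | TG2 => if a == 1%N then (6 * m - 3)%N else (2 * m)%N
  | _ => (2 * wl X a m + (tnum X a == tmax X))%N
  end.

Lemma ML_range X a m : dynkin_valid X -> in_I X a ->
  all (fun x => (x.1.1 == 0%N) || in_I X x.1.1) (ML X a m).
Proof.
case: X => [r|r|r|r| | | | |]; rewrite /ML; cbv beta iota zeta;
 try (by move=> _ Ha; rewrite all_map all_filter; apply/allP => b; rewrite mem_iota => Hb;
      apply/implyP => _; rewrite /= /in_I; lia).
all: move=> /= Hv Ha; repeat (case: ifP => ?); rewrite /= /in_I /=; lia.
Qed.

Lemma NL_range X a m : dynkin_valid X -> in_I X a -> (0 < m)%N ->
  all (fun x => (x.1.1 == 0%N) || (in_I X x.1.1 && (0 < x.1.2)%N)) (NL X a m).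
Proof.
case: X => [r|r|r|r| | | | |]; rewrite /NL; cbv beta iota zeta;
 try (by move=> _ Ha Hm; rewrite all_map all_filter; apply/allP => b; rewrite mem_iota => Hb;
      apply/implyP => _; rewrite /= /in_I; lia).
all: move=> /= Hv Ha Hm; repeat (case: ifP => ?); rewrite /= /in_I /=; lia.
Qed.

Lemma ML_lev X a m : dynkin_valid X -> in_I X a -> (0 < m)%N ->
  all (fun x => [|| x.1.1 == 0%N, x.1.2 == 0%N | (lev2 X x.1.1 x.1.2 < lev2 X a m.+1)%N])
      (ML X a m).
Proof.
case: X => [r|r|r|r| | | | |]; rewrite /ML; cbv beta iota zeta;
 try (by move=> _ Ha Hm; rewrite all_map all_filter; apply/allP => b; rewrite mem_iota => Hb;
      apply/implyP => _; rewrite /= /lev2 /wl /tnum /tmax /= ?divn1; lia).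
all: move=> /= Hv Ha Hm; rewrite /in_I /= in Ha; repeat (case: ifP => ?);
  rewrite /= /lev2 /wl /tnum /tmax /=; repeat (case: ifP => ?); rewrite ?divn1 ?divnn /=; lia.
Qed.

Lemma NL_w X a m : dynkin_valid X -> in_I X a -> (0 < m)%N ->
  all (fun x => (x.1.1 == 0%N) || (wl X x.1.1 x.1.2 < wl X a m.+1)%N) (NL X a m).
Proof.
case: X => [r|r|r|r| | | | |]; rewrite /NL; cbv beta iota zeta;
 try (by move=> _ Ha Hm; rewrite all_map all_filter; apply/allP => b; rewrite mem_iota => Hb;
      apply/implyP => _; rewrite /= /wl /tnum /tmax /= ?divn1; lia).
all: move=> /= Hv Ha Hm; rewrite /in_I /= in Ha; repeat (case: ifP => ?);
  rewrite /= /wl /tnum /tmax /=; repeat (case: ifP => ?); rewrite ?divn1 ?divnn /=; lia.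
Qed.
End Lists.


Section Gen.
Variable R : realType.
Local Notation C := R[i].
Variable S : comUnitRingType.
Implicit Types (T : nat -> nat -> C -> S).

Lemma Tx0a T m u : Tx T 0 m u = 1. Proof. by []. Qed.
Lemma Txa0 T a u : Tx T a 0 u = 1. Proof. by rewrite /Tx orbT. Qed.
Lemma TxE T a m u : (0 < a)%N -> (0 < m)%N -> Tx T a m u = T a m u.
Proof. by rewrite /Tx; case: a => // a; case: m. Qed.

Lemma Tx_unit X T b k v : (b == 0%N) || in_I X b ->
  (forall b k v, in_I X b -> (0 < k)%N -> T b k v \is a GRing.unit) ->
  Tx T b k v \is a GRing.unit.
Proof.
rewrite /Tx; case: ifP => [_ _ _|]; first exact: unitr1.
move=> /norP [/negbTE -> Hk] /= Hb HT; apply: HT => //; by case: k Hk.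
Qed.

Lemma Mfun_unit X T a m u : dynkin_valid X -> in_I X a ->
  (forall b k v, in_I X b -> (0 < k)%N -> T b k v \is a GRing.unit) ->
  Mfun X T a m u \is a GRing.unit.
Proof.
move=> Hv Ha HT; rewrite Mfun_ML big_seq; apply: (big_ind (fun x => x \is a GRing.unit)); first exact: unitr1.
- by move=> x y Hx Hy; rewrite unitrM Hx Hy.
- move=> x Hx; have Hb := allP (ML_range R m Hv Ha) x Hx.
  move: Hb; rewrite /Tx; case: ifP => [_ _|]; first exact: unitr1.
  move=> /norP [/negbTE -> Hk] /= Hb; apply: HT => //; by case: (x.1.2) Hk.
Qed.

Lemma Mfun_congr X T T' a m u : dynkin_valid X -> in_I X a ->
  (forall b k v, in_I X b -> (0 < k)%N -> T b k v = T' b k v) ->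
  Mfun X T a m u = Mfun X T' a m u.
Proof.
move=> Hv Ha HT; rewrite !Mfun_ML; apply: eq_big_seq => x Hx.
have := allP (ML_range R m Hv Ha) x Hx; rewrite /Tx.
case: ifP => // /norP [/negbTE -> Hk] /= Hb; apply: HT => //; by case: (x.1.2) Hk.
Qed.

Lemma Mfun_rmorph (S' : comUnitRingType) (f : {rmorphism S -> S'}) X T a m u :
  f (Mfun X T a m u) = Mfun X (fun b k v => f (T b k v)) a m u.
Proof.
rewrite !Mfun_ML rmorph_prod; apply: eq_bigr => x _.
by rewrite /Tx; case: ifP => _; rewrite ?rmorph1.
Qed.

Lemma Mfun_shift X T a m u c :
  Mfun X T a m (u + c) = Mfun X (fun b k v => T b k (v + c)) a m u.
Proof.
rewrite !Mfun_ML; apply: eq_bigr => x _.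
by rewrite /Tx; case: ifP => _ //; rewrite addrAC.
Qed.

Lemma ML0 X a : all (fun x => (x.1.1 == 0%N) || (x.1.2 == 0%N)) (ML R X a 0).
Proof.
case: X => [r|r|r|r| | | | |]; rewrite /ML; cbv beta iota zeta;
 try (by rewrite all_map all_filter; apply/allP => b _; apply/implyP => _; rewrite /= orbT).
all: repeat (case: ifP => ?); rewrite /=; lia.
Qed.

Lemma Mfun0 X T a u : Mfun X T a 0 u = 1.
Proof.
rewrite Mfun_ML big_seq big1 // => x Hx.
have := allP (ML0 X a) x Hx; rewrite /Tx => /orP [] ->; by rewrite ?orbT.
Qed.

Lemma Nfun_congr X (Y Y' : nat -> nat -> C -> S) a m u :
  dynkin_valid X -> in_I X a -> (0 < m)%N ->
  (forall b k v, in_I X b -> (0 < k)%N -> Y b k v = Y' b k v) ->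
  Nfun X Y a m u = Nfun X Y' a m u.
Proof.
move=> Hv Ha Hm HY; rewrite !Nfun_NL; apply: eq_big_seq => x Hx.
have := allP (NL_range R Hv Ha Hm) x Hx; rewrite /Yx.
case: ifP => // _ /= /andP [Hb Hk]; by rewrite HY.
Qed.

End Gen.


Arguments Tx : simpl never.
Arguments shift : simpl never.

Section Norm.
Variable R : realType.
Local Notation C := R[i].
Local Notation o := (shift R 1).
Local Notation h := (shift R 2).
Local Notation th := (shift R 3).

Lemma nz2 : (2%:R : C) != 0. Proof. by rewrite pnatr_eq0. Qed.
Lemma nz3 : (3%:R : C) != 0. Proof. by rewrite pnatr_eq0. Qed.

Lemma L1 (u : C) : u - h - h = u - o.
Proof. by rewrite /shift; field. Qed.
Lemma L2 (u : C) : u + h + h = u + o.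
Proof. by rewrite /shift; field. Qed.
Lemma L3 (u : C) : u + th + th = u + th *+ 2.
Proof. by rewrite /shift; field. Qed.
Lemma L4 (u : C) : u - th - th = u - th *+ 2.
Proof. by rewrite /shift; field. Qed.
Lemma L5 (u : C) : u + th *+ 2 - th = u + th.
Proof. by rewrite /shift; field. Qed.
Lemma L6 (u : C) : u + th *+ 2 + th = u + o.
Proof. by rewrite /shift; field. Qed.
Lemma L7 (u : C) : u - th *+ 2 - th = u - o.
Proof. by rewrite /shift; field. Qed.
Lemma L8 (u : C) : u - th *+ 2 + th = u - th.
Proof. by rewrite /shift; field. Qed.
Lemma L9 (u : C) : u - th + th *+ 2 = u + th.
Proof. by rewrite /shift; field. Qed.
Lemma L10 (u : C) : u + th - th *+ 2 = u - th.
Proof. by rewrite /shift; field. Qed.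
Lemma L11 (u : C) : u - th - th *+ 2 = u - o.
Proof. by rewrite /shift; field. Qed.
Lemma L12 (u : C) : u + th + th *+ 2 = u + o.
Proof. by rewrite /shift; field. Qed.
End Norm.

Section K.
Variable R : realType.
Local Notation C := R[i].
Variable S : comUnitRingType.
Local Notation o := (shift R 1).
Local Notation h := (shift R 2).
Local Notation th := (shift R 3).

Definition sX X b := shift R (tnum X b).

Definition K2stmt X (t : nat -> nat -> C -> S) a m u : Prop :=
  \prod_(x <- NL R X a m) (Tx t x.1.1 x.1.2 (u + x.2 - sX X x.1.1) *
                           Tx t x.1.1 x.1.2 (u + x.2 + sX X x.1.1))
  * (Mfun X t a m.-1 u * Mfun X t a m.+1 u)
  = Mfun X t a m (u - sX X a) * Mfun X t a m (u + sX X a) *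
    \prod_(x <- NL R X a m) (Tx t x.1.1 x.1.2.-1 (u + x.2) * Tx t x.1.1 x.1.2.+1 (u + x.2)).

Ltac normC := rewrite ?addr0 ?addrK ?subrK ?L1 ?L2 ?L3 ?L4 ?L5 ?L6 ?L7 ?L8 ?L9 ?L10 ?L11 ?L12.

Lemma K2_B r t a m u : (2 <= r)%N -> (1 <= a <= r)%N -> (0 < m)%N -> K2stmt (TB r) t a m u.
Proof.
move=> Hr Ha Hm.
have [n [-> | ->]] : exists n, m = n.*2.+2 \/ m = n.*2.+1 by exists (m.-1)./2; lia.
all: rewrite /K2stmt !Mfun_ML /NL /ML /sX /tnum; cbv beta iota zeta.
all: rewrite /= ?odd_double /= ?doubleK ?uphalf_double.
all: repeat (case: ifP => ?); rewrite ?big_cons ?big_nil /=; repeat (case: ifP => ?);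
  try (exfalso; lia).
all: rewrite /= ?doubleK ?uphalf_double ?doubleS; normC; ring.
Qed.

Lemma K2_C r t a m u : (2 <= r)%N -> (1 <= a <= r)%N -> (0 < m)%N -> K2stmt (TC r) t a m u.
Proof.
move=> Hr Ha Hm.
have [n [-> | ->]] : exists n, m = n.*2.+2 \/ m = n.*2.+1 by exists (m.-1)./2; lia.
all: rewrite /K2stmt !Mfun_ML /NL /ML /sX /tnum; cbv beta iota zeta.
all: rewrite /= ?odd_double /= ?doubleK ?uphalf_double.
all: repeat (case: ifP => ?); rewrite ?big_cons ?big_nil /=; repeat (case: ifP => ?);
  try (exfalso; lia).
all: rewrite /= ?doubleK ?uphalf_double ?doubleS; normC; ring.
Qed.

Lemma K2_F4 t a m u : (2 <= 4)%N -> (1 <= a <= 4)%N -> (0 < m)%N -> K2stmt TF4 t a m u.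
Proof.
move=> Hr Ha Hm.
have [n [-> | ->]] : exists n, m = n.*2.+2 \/ m = n.*2.+1 by exists (m.-1)./2; lia.
all: rewrite /K2stmt !Mfun_ML /NL /ML /sX /tnum; cbv beta iota zeta.
all: rewrite /= ?odd_double /= ?doubleK ?uphalf_double.
all: repeat (case: ifP => ?); rewrite ?big_cons ?big_nil /=; repeat (case: ifP => ?);
  try (exfalso; lia).
all: rewrite /= ?doubleK ?uphalf_double ?doubleS; normC; ring.
Qed.


Definition is_sl X := match X with TA _ | TD _ | TE6 | TE7 | TE8 => true | _ => false end.

Lemma K2_SL X t a m u : is_sl X -> (0 < m)%N -> K2stmt X t a m u.
Proof.
move=> Hs Hm; rewrite /K2stmt !Mfun_ML /NL /ML /sX.
case: X Hs => [r|r|r|r| | | | |] // _; cbv beta iota zeta;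
  rewrite !big_map !big_filter /= !big_split /=; normC; ring.
Qed.

Lemma K2_G2 t a m u : (1 <= a <= 2)%N -> (0 < m)%N -> K2stmt TG2 t a m u.
Proof.
move=> Ha Hm.
have [->|->] : a = 1%N \/ a = 2%N by lia.
- rewrite /K2stmt !Mfun_ML /NL /ML /sX /tnum; cbv beta iota zeta.
  rewrite ?big_cons ?big_nil /=.
  pose P := (3 * m - 2)%N.
  have e1 : (3 * m - 2)%N = P by [].
  have e2 : (3 * m - 1)%N = P.+1 by rewrite /P; lia.
  have e3 : (3 * m + 1)%N = P.+3 by rewrite /P; lia.
  have e4 : (3 * m + 2)%N = P.+4 by rewrite /P; lia.
  have e5 : (3 * m.-1)%N = P.-1 by rewrite /P; lia.
  have e6 : (3 * m.+1)%N = P.+4.+1 by rewrite /P; lia.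
  have e7 : (3 * m)%N = P.+2 by rewrite /P; lia.
  rewrite e1 e2 e3 e4 e5 e6 e7 /=; normC; ring.
have [n [-> | [-> | ->]]] : exists n, m = (3 * n + 1)%N \/ m = (3 * n + 2)%N \/ m = (3 * n + 3)%N
  by exists ((m.-1) %/ 3)%N; lia.
all: rewrite /K2stmt !Mfun_ML /NL /ML /sX /tnum; cbv beta iota zeta.
all: repeat (case: ifP => ?); rewrite ?big_cons ?big_nil /=; try (exfalso; lia).
- have e1 : ((3 * n + 1) %/ 3)%N = n by lia.
  have e2 : ((3 * n + 1).-1 %/ 3)%N = n by lia.
  have e3 : ((3 * n + 1).+1 %/ 3)%N = n by lia.
  rewrite e1 e2 e3; normC; ring.
- have e1 : ((3 * n + 2) %/ 3)%N = n by lia.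
  have e2 : ((3 * n + 2).-1 %/ 3)%N = n by lia.
  have e3 : ((3 * n + 2).+1 %/ 3)%N = n.+1 by lia.
  rewrite e1 e2 e3; normC; ring.
- have e1 : ((3 * n + 3) %/ 3)%N = n.+1 by lia.
  have e2 : ((3 * n + 3).-1 %/ 3)%N = n by lia.
  have e3 : ((3 * n + 3).+1 %/ 3)%N = n.+1 by lia.
  rewrite e1 e2 e3 /=; normC; ring.
Qed.

Lemma K2_all X t a m u : dynkin_valid X -> in_I X a -> (0 < m)%N -> K2stmt X t a m u.
Proof.
case: X => [r|r|r|r| | | | |] Hv Ha Hm;
  try (by apply: K2_SL); rewrite /in_I /= in Ha Hv.
- exact: K2_B.
- exact: K2_C.
- exact: K2_F4.
- exact: K2_G2.
Qed.
End K.


Arguments Tx : simpl never.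
Arguments shift : simpl never.

Section Core.
Variable S : comUnitRingType.

Lemma unit_div (x y : S) : x \is a GRing.unit -> y \is a GRing.unit -> x / y \is a GRing.unit.
Proof. by move=> hx hy; rewrite unitrM hx unitrV. Qed.

Lemma core_fwd (y1 y2 D1 D2 Mm Mp N M0 M2 z0 z2 P0 Q B : S) :
  y1 * D1 = Mm -> y2 * D2 = Mp -> N * (M0 * M2) = Mm * Mp -> z0 * M0 = P0 ->
  D1 * D2 = P0 * Q -> z2 * M2 = B ->
  y1 \is a GRing.unit -> y2 \is a GRing.unit -> P0 \is a GRing.unit ->
  M0 \is a GRing.unit -> M2 \is a GRing.unit -> z0 \is a GRing.unit -> z2 \is a GRing.unit ->
  y1 * y2 = N / (z0 * z2) -> Q = B.
Proof.
move=> e1 e2 eN e0 eD e2' u1 u2 uP u0 u2' uz0 uz2 E.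
have uz : z0 * z2 \is a GRing.unit by rewrite unitrM uz0 uz2.
have E2 : y1 * y2 * (z0 * z2) = N by rewrite E divrK.
have E3 : y1 * y2 * P0 * B = y1 * y2 * P0 * Q.
  transitivity (y1 * y2 * (z0 * z2) * (M0 * M2)); first by rewrite -e0 -e2'; ring.
  rewrite E2 eN -e1 -e2.
  have -> : y1 * D1 * (y2 * D2) = y1 * y2 * (D1 * D2) by ring.
  by rewrite eD; ring.
have uy : y1 * y2 * P0 \is a GRing.unit by rewrite !unitrM u1 u2 uP.
by apply: (mulrI uy); rewrite E3.
Qed.

Lemma core_bwd (y1 y2 D1 D2 Mm Mp N M0 M2 z0 z2 P0 Q B : S) :
  y1 * D1 = Mm -> y2 * D2 = Mp -> N * (M0 * M2) = Mm * Mp -> z0 * M0 = P0 ->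
  D1 * D2 = P0 * Q -> z2 * M2 = B ->
  P0 \is a GRing.unit -> Q \is a GRing.unit ->
  M0 \is a GRing.unit -> M2 \is a GRing.unit ->
  Q = B -> y1 * y2 = N / (z0 * z2).
Proof.
move=> e1 e2 eN e0 eD e2' uP uQ u0 u2' EQ.
have uz0 : z0 \is a GRing.unit.
  have : z0 * M0 \is a GRing.unit by rewrite e0.
  by rewrite unitrM => /andP [].
have uz2 : z2 \is a GRing.unit.
  have : z2 * M2 \is a GRing.unit by rewrite e2' -EQ.
  by rewrite unitrM => /andP [].
have uz : z0 * z2 \is a GRing.unit by rewrite unitrM uz0 uz2.
have uM : M0 * M2 \is a GRing.unit by rewrite unitrM u0 u2'.
apply: (mulIr uz); rewrite divrK //.
apply: (mulIr uM); rewrite eN -e1 -e2.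
have -> : y1 * y2 * (z0 * z2) * (M0 * M2) = y1 * y2 * (z0 * M0) * (z2 * M2) by ring.
rewrite e0 e2' -EQ.
have -> : y1 * D1 * (y2 * D2) = y1 * y2 * (D1 * D2) by ring.
by rewrite eD; ring.
Qed.

End Core.

Section KS.
Variable R : realType.
Local Notation C := R[i].
Variable S : comUnitRingType.
Variable X : dynkin.
Implicit Types (t : nat -> nat -> C -> S).

Definition yT t b k v : S := Mfun X t b k v / (Tx t b k.-1 v * Tx t b k.+1 v).
Definition goodT t b k v : Prop :=
  t b k (v - sX R X b) * t b k (v + sX R X b) = Tx t b k.-1 v * Tx t b k.+1 v + Mfun X t b k v.
Definition Tunits t : Prop :=
  forall b k v, in_I X b -> (0 < k)%N -> t b k v \is a GRing.unit.

Lemma invr_div (x y : S) : x \is a GRing.unit -> y \is a GRing.unit -> (x / y)^-1 = y / x.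
Proof. by move=> hx hy; rewrite invrM ?unitrV // invrK mulrC. Qed.

Lemma TxU t b k v : Tunits t -> (b == 0%N) || in_I X b -> Tx t b k v \is a GRing.unit.
Proof. by move=> HT Hb; apply: (Tx_unit k v Hb HT). Qed.

Lemma D1_entry t b k v : Tunits t ->
  (b = 0%N \/ [/\ in_I X b, (0 < k)%N & goodT t b k v]) ->
  (1 + Yx (yT t) b k v) * (Tx t b k.-1 v * Tx t b k.+1 v) =
  Tx t b k (v - sX R X b) * Tx t b k (v + sX R X b).
Proof.
move=> HT [->|[Hb Hk Hg]]; first by rewrite /Yx eqxx !Tx0a addr0 !mulr1.
have b0 : (0 < b)%N by move: Hb; rewrite /in_I => /andP [].
have uD : Tx t b k.-1 v * Tx t b k.+1 v \is a GRing.unit.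
  by rewrite unitrM !(TxU _ _ HT) // Hb orbT.
rewrite /Yx; case: eqP => [E|_]; first by move: b0; rewrite E.
rewrite mulrDl mul1r /yT divrK // [Tx t b k (v - _)]TxE // [Tx t b k (v + _)]TxE // Hg addrC.
Qed.

Lemma KN t a m u : dynkin_valid X -> in_I X a -> (0 < m)%N -> Tunits t ->
  (forall x, x \in NL R X a m -> x.1.1 != 0%N -> goodT t x.1.1 x.1.2 (u + x.2)) ->
  Nfun X (yT t) a m u * (Mfun X t a m.-1 u * Mfun X t a m.+1 u) =
  Mfun X t a m (u - sX R X a) * Mfun X t a m (u + sX R X a).
Proof.
move=> Hv Ha Hm HT Hg.
set Dp := \prod_(x <- NL R X a m) (Tx t x.1.1 x.1.2.-1 (u + x.2) * Tx t x.1.1 x.1.2.+1 (u + x.2)).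
have uD : Dp \is a GRing.unit.
  rewrite /Dp big_seq; apply: (big_ind (fun x => x \is a GRing.unit)); first exact: unitr1.
    by move=> x y hx hy; rewrite unitrM hx hy.
  move=> x Hx; have := allP (NL_range R Hv Ha Hm) x Hx => /orP [] Hb.
    by rewrite unitrM !(TxU _ _ HT) // Hb.
  by move: Hb => /andP [Hb _]; rewrite unitrM !(TxU _ _ HT) // Hb orbT.
apply: (mulIr uD).
have -> : Nfun X (yT t) a m u * (Mfun X t a m.-1 u * Mfun X t a m.+1 u) * Dp =
          (Nfun X (yT t) a m u * Dp) * (Mfun X t a m.-1 u * Mfun X t a m.+1 u) by ring.
rewrite Nfun_NL /Dp -big_split /=.
have -> : \prod_(i <- NL R X a m)
     ((1 + Yx (yT t) i.1.1 i.1.2 (u + i.2)) *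
      (Tx t i.1.1 i.1.2.-1 (u + i.2) * Tx t i.1.1 i.1.2.+1 (u + i.2))) =
   \prod_(x <- NL R X a m) (Tx t x.1.1 x.1.2 (u + x.2 - sX R X x.1.1) *
                           Tx t x.1.1 x.1.2 (u + x.2 + sX R X x.1.1)).
  apply: eq_big_seq => x Hx; apply: D1_entry => //.
  have := allP (NL_range R Hv Ha Hm) x Hx => /orP [/eqP -> | /andP [Hb Hk]]; first by left.
  right; split => //; apply: Hg => //; apply/eqP => E; by move: Hb; rewrite E.
exact: (K2_all t u Hv Ha Hm).
Qed.


Lemma yT_mulD t a m v : Tunits t -> in_I X a ->
  yT t a m v * (Tx t a m.-1 v * Tx t a m.+1 v) = Mfun X t a m v.
Proof.
move=> HT Ha; rewrite /yT divrK //.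
by rewrite unitrM !(TxU _ _ HT) // Ha orbT.
Qed.

Lemma z_eq t a k u : dynkin_valid X -> Tunits t -> in_I X a -> (0 < k)%N ->
  (1 + Yinvx (yT t) a k u) * Mfun X t a k u = Tx t a k.-1 u * Tx t a k.+1 u + Mfun X t a k u.
Proof.
move=> Hv HT Ha Hk.
have uM : Mfun X t a k u \is a GRing.unit by apply: Mfun_unit.
have uD : Tx t a k.-1 u * Tx t a k.+1 u \is a GRing.unit by rewrite unitrM !(TxU _ _ HT) // Ha orbT.
rewrite /Yinvx; case: eqP => [E|_]; first by move: Hk; rewrite E.
by rewrite /yT invr_div // mulrDl mul1r divrK // addrC.
Qed.

Lemma z0_eq t a m u : dynkin_valid X -> Tunits t -> in_I X a -> (0 < m)%N ->
  ((1 < m)%N -> goodT t a m.-1 u) ->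
  (1 + Yinvx (yT t) a m.-1 u) * Mfun X t a m.-1 u =
  Tx t a m.-1 (u - sX R X a) * Tx t a m.-1 (u + sX R X a).
Proof.
move=> Hv HT Ha Hm Hg.
have a0 : (0 < a)%N by move: Ha; rewrite /in_I => /andP [].
case: m Hm Hg => [//|[|m]] _ Hg.
  by rewrite /Yinvx eqxx addr0 mul1r Mfun0 !Txa0 mulr1.
by rewrite z_eq //= -Hg // !TxE.
Qed.

Lemma good_iff t a m u : in_I X a ->
  goodT t a m.+1 u <->
  Tx t a m.+1 (u - sX R X a) * Tx t a m.+1 (u + sX R X a) =
  Tx t a m u * Tx t a m.+2 u + Mfun X t a m.+1 u.
Proof.
move=> Ha; have a0 : (0 < a)%N by move: Ha; rewrite /in_I => /andP [].
by rewrite /goodT /= [Tx t a _ (u - _)]TxE // [Tx t a _ (u + _)]TxE.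
Qed.

Lemma Kfwd t a m u : dynkin_valid X -> in_I X a -> (0 < m)%N -> Tunits t ->
  (forall x, x \in NL R X a m -> x.1.1 != 0%N -> goodT t x.1.1 x.1.2 (u + x.2)) ->
  ((1 < m)%N -> goodT t a m.-1 u) ->
  (1 + Yinvx (yT t) a m.+1 u) \is a GRing.unit ->
  yT t a m (u - sX R X a) * yT t a m (u + sX R X a) =
    Nfun X (yT t) a m u / ((1 + Yinvx (yT t) a m.-1 u) * (1 + Yinvx (yT t) a m.+1 u)) ->
  goodT t a m.+1 u.
Proof.
move=> Hv Ha Hm HT Hg Hp Hz2 E.
have uM : forall k v, Mfun X t a k v \is a GRing.unit by move=> k v; apply: Mfun_unit.
have uT : forall k v, Tx t a k v \is a GRing.unit by move=> k v; rewrite (TxU _ _ HT) // Ha orbT.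
apply/good_iff => //.
apply: (core_fwd (yT_mulD m (u - sX R X a) HT Ha) (yT_mulD m (u + sX R X a) HT Ha) (KN Hv Ha Hm HT Hg)
          (z0_eq Hv HT Ha Hm Hp) _ (z_eq u Hv HT Ha (ltn0Sn m))) => //.
- ring.
- by apply: unit_div; rewrite ?unitrM ?uT.
- by apply: unit_div; rewrite ?unitrM ?uT.
- by rewrite unitrM !uT.
- have : (1 + Yinvx (yT t) a m.-1 u) * Mfun X t a m.-1 u \is a GRing.unit.
    by rewrite (z0_eq Hv HT Ha Hm Hp) unitrM !uT.
  by rewrite unitrM => /andP [].
Qed.

Lemma Kbwd t a m u : dynkin_valid X -> in_I X a -> (0 < m)%N -> Tunits t ->
  (forall x, x \in NL R X a m -> x.1.1 != 0%N -> goodT t x.1.1 x.1.2 (u + x.2)) ->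
  ((1 < m)%N -> goodT t a m.-1 u) ->
  goodT t a m.+1 u ->
  yT t a m (u - sX R X a) * yT t a m (u + sX R X a) =
    Nfun X (yT t) a m u / ((1 + Yinvx (yT t) a m.-1 u) * (1 + Yinvx (yT t) a m.+1 u)).
Proof.
move=> Hv Ha Hm HT Hg Hp E.
have uM : forall k v, Mfun X t a k v \is a GRing.unit by move=> k v; apply: Mfun_unit.
have uT : forall k v, Tx t a k v \is a GRing.unit by move=> k v; rewrite (TxU _ _ HT) // Ha orbT.
apply: (core_bwd (Q := Tx t a m.+1 (u - sX R X a) * Tx t a m.+1 (u + sX R X a)) (yT_mulD m (u - sX R X a) HT Ha) (yT_mulD m (u + sX R X a) HT Ha) (KN Hv Ha Hm HT Hg)
          (z0_eq Hv HT Ha Hm Hp) _ (z_eq u Hv HT Ha (ltn0Sn m))) => //.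
- ring.
- by rewrite unitrM !uT.
- by rewrite unitrM !uT.
- by move/good_iff: E => ->.
Qed.

End KS.


Section Lat.
Variable R : realType.
Local Notation C := R[i].
Variable xi : option C.
Local Notation per := (period xi).

Definition c6 (k : int) : C := k%:~R / 6%:R.
Definition cls (u v : C) : Prop := exists (k j : int), v = u + c6 k + j%:~R * per.
Definition rep (u : C) : C := epsilon (inhabits (0 : C)) (cls u).
Definition hgt (u : C) : int :=
  epsilon (inhabits (0 : int)) (fun k => exists j : int, u = rep u + c6 k + j%:~R * per).

Lemma c6D a b : c6 (a + b) = c6 a + c6 b.
Proof. by rewrite /c6 intrD mulrDl. Qed.
Lemma c6N a : c6 (- a) = - c6 a.
Proof. by rewrite /c6 intrN mulNr. Qed.

Lemma cls_refl u : cls u u.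
Proof. by exists 0, 0; rewrite /c6 !mul0r !addr0. Qed.

Lemma cls_sym u v : cls u v -> cls v u.
Proof.
by move=> [k [j ->]]; exists (- k), (- j); rewrite c6N intrN mulNr; ring.
Qed.

Lemma cls_trans u v w : cls u v -> cls v w -> cls u w.
Proof.
move=> [k [j ->]] [k' [j' ->]]; exists (k + k'), (j + j').
by rewrite c6D intrD mulrDl; ring.
Qed.

Lemma cls_eq u v : cls u v -> cls u = cls v.
Proof.
move=> H; apply: functional_extensionality => w; apply: propositional_extensionality.
split => [Hw|Hw]; first exact: cls_trans (cls_sym H) Hw.
exact: cls_trans H Hw.
Qed.

Lemma rep_cls u : cls u (rep u).
Proof. by rewrite /rep; apply: epsilon_spec; exists u; apply: cls_refl. Qed.

Lemma rep_eq u v : cls u v -> rep u = rep v.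
Proof. by move=> H; rewrite /rep (cls_eq H). Qed.

Lemma hgt_spec u : exists j : int, u = rep u + c6 (hgt u) + j%:~R * per.
Proof.
rewrite /hgt; apply: (epsilon_spec (inhabits (0:int)) (fun k => exists j : int, u = rep u + c6 k + j%:~R * per)).
by have [k [j E]] := cls_sym (rep_cls u); exists k, j.
Qed.


Lemma cmulR (a c : R) : Complex 0 a * real_complex R c = Complex 0 (a * c).
Proof. by simpc. Qed.

Lemma c6_uniq (Hs : spectral_ok xi) k k' (j j' : int) :
  c6 k + j%:~R * per = c6 k' + j'%:~R * per -> k = k'.
Proof.
move=> E.
have E2 : c6 (k - k') = (j' - j)%:~R * per.
  rewrite c6D c6N intrD intrN mulrDl mulNr.
  apply/eqP; rewrite -subr_eq0; apply/eqP.
  transitivity ((c6 k + j%:~R * per) - (c6 k' + j'%:~R * per)); first by ring.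
  by rewrite E subrr.
apply/eqP; rewrite -subr_eq0; apply/negPn/negP => HK.
have nz : c6 (k - k') != 0.
  by rewrite /c6 mulf_eq0 negb_or intr_eq0 HK invr_eq0 pnatr_eq0.
move: E2 nz; case: xi Hs => [x|] /= Hs E2 nz; last by rewrite E2 mulr0 eqxx in nz.
set J := (j' - j)%:~R : C in E2.
have Jnz : J != 0 by apply/eqP => HJ; move: nz; rewrite E2 HJ mul0r eqxx.
set p := Complex 0 (2 * pi) / x in E2.
have pnz : p != 0 by apply/eqP => HJ; move: nz; rewrite E2 HJ mulr0 eqxx.
have anz : Complex 0 (2 * pi) != 0 :> C.
  rewrite eq_complex /= negb_and eqxx /= mulf_eq0 negb_or pnatr_eq0 /=.
  by apply: lt0r_neq0; exact: pi_gt0.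
have xnz : x != 0 by apply/eqP => HJ; move: pnz; rewrite /p HJ invr0 mulr0 eqxx.
set q : rat := (k - k')%:~R / (6%:R * (j' - j)%:~R).
have Eq : p = ratr q.
  rewrite /q fmorph_div rmorphM /= !ratr_int ratr_nat.
  apply: (mulIf Jnz); rewrite [p * J]mulrC -E2 /c6 /J.
  move: Jnz; rewrite /J => Jnz.
  field.
  by rewrite -intrB.
have Ex : x = Complex 0 (2 * pi) / p.
  by rewrite /p invf_div mulrCA mulfV // mulr1.
apply: (Hs q^-1); rewrite Ex Eq.
rewrite -(fmorph_rat (real_complex R)) -fmorphV /= cmulR.
by rewrite -fmorphV.
Qed.

Lemma hgt_add (Hs : spectral_ok xi) u k : hgt (u + c6 k) = hgt u + k.
Proof.
have Hc : cls u (u + c6 k) by exists k, 0; rewrite mul0r addr0.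
have [j Ej] := hgt_spec u.
have [j' Ej'] := hgt_spec (u + c6 k).
rewrite -(rep_eq Hc) in Ej'.
apply: (@c6_uniq Hs _ _ j' j).
apply: (addrI (rep u)); rewrite !addrA -Ej' c6D addrA -[in RHS]addrA [_ + j%:~R * _]addrC addrA -Ej.
by [].
Qed.

Lemma hgt_per (Hs : spectral_ok xi) u : hgt (u + per) = hgt u.
Proof.
have Hc : cls u (u + per) by exists 0, 1; rewrite /c6 mul0r addr0 mul1r.
have [j Ej] := hgt_spec u.
have [j' Ej'] := hgt_spec (u + per).
rewrite -(rep_eq Hc) in Ej'.
apply: (@c6_uniq Hs _ _ j' (j + 1)).
apply: (addrI (rep u)); rewrite !addrA -Ej' intrD mulrDl mul1r addrA -[rep u + _ + _]Ej.
by [].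
Qed.

End Lat.


Arguments Tx : simpl never.
Arguments shift : simpl never.

Section Fix.
Variables (I A : Type) (lev : I -> nat) (Phi : (I -> A) -> I -> A) (f0 : I -> A).

Definition fixit : I -> A := fun i => iter (lev i).+1 Phi f0 i.

Lemma lev_ind (P : I -> Prop) :
  (forall i, (forall j, (lev j < lev i)%N -> P j) -> P i) -> forall i, P i.
Proof.
move=> H i.
suff : forall n j, (lev j < n)%N -> P j by apply; exact: ltnSn.
elim=> [//|n IH] j Hj; apply: H => k Hk; apply: IH; exact: leq_trans Hk Hj.
Qed.

Lemma fixit_eq :
  (forall f g i, (forall j, (lev j < lev i)%N -> f j = g j) -> Phi f i = Phi g i) ->
  forall i, fixit i = Phi fixit i.
Proof.
move=> loc.
have stab : forall n m i, (lev i < n)%N -> (lev i < m)%N -> iter n Phi f0 i = iter m Phi f0 i.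
  elim=> [//|n IH] [//|m] i Hn Hm /=; apply: loc => j Hj.
  apply: IH; exact: leq_trans Hj _.
move=> i; rewrite /fixit iterS; apply: loc => j Hj.
by apply: stab => //; exact: ltnSn.
Qed.

Lemma fixit_inv (P : A -> Prop) :
  (forall i, P (f0 i)) -> (forall f, (forall i, P (f i)) -> forall i, P (Phi f i)) ->
  forall i, P (fixit i).
Proof.
move=> H0 HS i; rewrite /fixit.
suff : forall n j, P (iter n Phi f0 j) by [].
by elim=> [|n IH] j //=; apply: HS.
Qed.

End Fix.

Section Minl.
Variable R : realType.
Local Notation C := R[i].
Variable S : comUnitRingType.
Variable Y : nat -> nat -> C -> S.
Local Notation th := (shift R 3).

Definition bx (beta : nat -> C -> S) b v : S := if b == 0%N then 1 else beta b v.

Definition Minl X (beta : nat -> C -> S) a u : S :=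
  match X with
  | TB r => if (a <= r - 2)%N then bx beta a.-1 u * bx beta a.+1 u
            else if a == (r - 1)%N then bx beta (r - 2)%N u * (beta (r - 1)%N u / Y r 1 u)
            else beta (r - 1)%N u
  | TC r => if (a <= r - 2)%N then bx beta a.-1 u * bx beta a.+1 u
            else if a == (r - 1)%N then bx beta (r - 2)%N u * beta r u
            else bx beta (r - 2)%N u * beta r u / Y (r - 1)%N 1 u
  | TF4 => if a == 1%N then beta 2%N u
           else if a == 2%N then beta 1%N u * (beta 2%N u * beta 4%N u / Y 3 1 u)
           else if a == 3%N then beta 2%N u * beta 4%N u else beta 3%N u
  | TG2 => if a == 1%N then beta 1%N (u - th) * beta 1%N (u + th) / (beta 2%N u * Y 2 2 u)
           else beta 1%N u
  | _ => \prod_(b <- iota 1 (rank X) | adj X a b) beta b u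
  end.

Definition cs X a : seq C :=
  if X is TG2 then (if a == 1%N then [:: 0; th; - th] else [:: 0]) else [:: 0].

Lemma cs0 X a : (0 : C) \in cs X a.
Proof. by case: X => [r|r|r|r| | | | |] /=; rewrite ?inE ?eqxx //; case: ifP => _; rewrite !inE eqxx. Qed.

Lemma Minl_ext X (beta beta' : nat -> C -> S) a w w' :
  dynkin_valid X -> in_I X a ->
  (forall b c, c \in cs X a -> beta b (w + c) = beta' b (w' + c)) ->
  (forall b k, in_I X b -> (0 < k)%N -> Y b k w = Y b k w') ->
  Minl X beta a w = Minl X beta' a w'.
Proof.
move=> Hv Ha Hb HY.
have H0 : forall b, beta b w = beta' b w'.
  move=> b; have E : beta b (w + 0) = beta' b (w' + 0) by apply: Hb; exact: cs0.
  by rewrite !addr0 in E.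
case: X Hv Ha Hb HY => [r|r|r|r| | | | |] /= Hv Ha Hb HY;
  try (by apply: eq_bigr => b _; rewrite H0); rewrite /in_I /= in Ha.
- rewrite /bx !H0 HY //; rewrite /in_I /=; lia.
- rewrite /bx !H0 HY //; rewrite /in_I /=; lia.
- by rewrite !H0 HY.
- case: ifP => Ha1; last by rewrite H0.
  have Hp : beta 1%N (w + th) = beta' 1%N (w' + th) by apply: Hb; rewrite Ha1 !inE eqxx orbT.
  have Hm : beta 1%N (w - th) = beta' 1%N (w' - th) by apply: Hb; rewrite Ha1 !inE eqxx !orbT.
  by rewrite Hp Hm H0 HY.
Qed.

Lemma Minl_unit X (beta : nat -> C -> S) a w :
  dynkin_valid X -> in_I X a ->
  (forall b v, beta b v \is a GRing.unit) ->
  (forall b k v, in_I X b -> (0 < k)%N -> Y b k v \is a GRing.unit) ->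
  Minl X beta a w \is a GRing.unit.
Proof.
move=> Hv Ha Hb HY.
have Hx : forall b v, bx beta b v \is a GRing.unit.
  by move=> b v; rewrite /bx; case: ifP => _; [exact: unitr1 | exact: Hb].
case: X Hv Ha HY => [r|r|r|r| | | | |] /= Hv Ha HY;
  try (by rewrite big_seq_cond; apply: (big_ind (fun x => x \is a GRing.unit)) => //;
          [exact: unitr1 | by move=> x y hx hy; rewrite unitrM hx hy]);
  rewrite /in_I /= in Ha.
- repeat case: ifP => _; rewrite ?unitrM ?unitrV ?Hx ?Hb ?HY //; rewrite /in_I /=; lia.
- repeat case: ifP => _; rewrite ?unitrM ?unitrV ?Hx ?Hb ?HY //; rewrite /in_I /=; lia.
- by repeat case: ifP => _; rewrite ?unitrM ?unitrV ?Hx ?Hb ?HY.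
- by repeat case: ifP => _; rewrite ?unitrM ?unitrV ?unitrM ?Hx ?Hb ?HY.
Qed.

End Minl.


Arguments Tx : simpl never.
Arguments shift : simpl never.

Section Basic.
Variable R : realType.
Local Notation C := R[i].

Definition dd (X : dynkin) (a : nat) : int :=
  if tnum X a == 1%N then 6%:Z else if tnum X a == 2%N then 3%:Z else 2%:Z.

Lemma tnum_cases X a : [|| tnum X a == 1%N, tnum X a == 2%N | tnum X a == 3%N].
Proof. by case: X => [r|r|r|r| | | | |] /=; repeat case: ifP. Qed.

Lemma dd_bounds X a : (2 <= dd X a) && (dd X a <= 6).
Proof. by rewrite /dd; case/or3P: (tnum_cases X a) => /eqP ->. Qed.

Lemma sX_c6 X a : sX R X a = c6 R (dd X a).
Proof.
rewrite /sX /dd /c6; case/or3P: (tnum_cases X a) => /eqP -> /=; rewrite /shift -pmulrn;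
  by field.
Qed.

Lemma c6_th : shift R 3 = c6 R 2.
Proof. by rewrite /c6 /shift -pmulrn; field. Qed.

Lemma cs_c6 X a c : c \in cs R X a -> exists k : int, c = c6 R k /\ `|k| < dd X a.
Proof.
have h0 : (0 : C) = c6 R 0 by rewrite /c6 mul0r.
have Hb := dd_bounds X a.
case: X Hb => [r|r|r|r| | | | |] /= Hb;
  try (by rewrite inE => /eqP ->; exists 0; split => //; lia).
case: ifP => Ha; last by rewrite inE => /eqP ->; exists 0; split => //; lia.
have -> : dd TG2 a = 6 by move/eqP: Ha => ->.
rewrite !inE => /or3P [] /eqP ->.
- by exists 0.
- by exists 2; rewrite c6_th.
- by exists (-2); rewrite c6N c6_th.
Qed.

End Basic.

Section Stage1.
Variable R : realType.
Local Notation C := R[i].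
Variable S : comUnitRingType.
Variable X : dynkin.
Variable xi : option C.
Variable Y : nat -> nat -> C -> S.
Local Notation per := (period xi).
Local Notation hg := (hgt xi).

Hypothesis Hv : dynkin_valid X.
Hypothesis Hs : spectral_ok xi.

Definition G1 (beta : nat -> C -> S) a v : S := Minl Y X beta a v * (1 + (Y a 1 v)^-1).
Definition lv (h : int) : nat := if (0 <= h)%R then absz h else (12 + absz h)%N.
Definition lev1 (i : nat * C) : nat := lv (hg i.2).
Definition Phi1 (beta : nat * C -> S) (i : nat * C) : S :=
  let a := i.1 in let u := i.2 in let s := sX R X a in let d := dd X a in
  let b' := fun b v => beta (b, v) in
  if in_I X a then
    (if (0 <= hg u) && (hg u < d + d) then 1
     else if 0 <= hg u then G1 b' a (u - s) / beta (a, u - s - s)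
     else G1 b' a (u + s) / beta (a, u + s + s))
  else 1.
Definition B1 := fixit lev1 Phi1 (fun _ => 1).
Definition bet b v := B1 (b, v).

Lemma hg_sub a u : hg (u - sX R X a) = hg u - dd X a.
Proof. by rewrite sX_c6 -c6N hgt_add. Qed.
Lemma hg_add a u : hg (u + sX R X a) = hg u + dd X a.
Proof. by rewrite sX_c6 hgt_add. Qed.

Lemma Phi1_loc f g i : (forall j, (lev1 j < lev1 i)%N -> f j = g j) -> Phi1 f i = Phi1 g i.
Proof.
case: i => a u H; rewrite /Phi1 /=; case: ifP => Ha //.
have Hd := dd_bounds X a.
case: ifP => Hw //.
case: ifP => Hh.
- congr (_ / _).
  + rewrite /G1; congr (_ * _); apply: Minl_ext => // b c Hc.
    have [k [-> Hk]] := cs_c6 Hc.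
    apply: H; rewrite /lev1 /= hgt_add // hg_sub.
    move: Hw Hh Hk Hd; set h := hg u; set d := dd X a => Hw Hh Hk Hd.
    rewrite /lv; case: ifP => ?; case: ifP => ?; lia.
  + apply: H; rewrite /lev1 /= !hg_sub.
    move: Hw Hh Hd; set h := hg u; set d := dd X a => Hw Hh Hd.
    rewrite /lv; case: ifP => ?; case: ifP => ?; lia.
- congr (_ / _).
  + rewrite /G1; congr (_ * _); apply: Minl_ext => // b c Hc.
    have [k [-> Hk]] := cs_c6 Hc.
    apply: H; rewrite /lev1 /= hgt_add // hg_add.
    move: Hw Hh Hk Hd; set h := hg u; set d := dd X a => Hw Hh Hk Hd.
    rewrite /lv; case: ifP => ?; case: ifP => ?; lia.
  + apply: H; rewrite /lev1 /= !hg_add.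
    move: Hw Hh Hd; set h := hg u; set d := dd X a => Hw Hh Hd.
    rewrite /lv; case: ifP => ?; case: ifP => ?; lia.
Qed.


Hypothesis HYu : forall b k v, in_I X b -> (0 < k)%N -> Y b k v \is a GRing.unit.
Hypothesis HY1 : forall b k v, in_I X b -> (0 < k)%N -> 1 + Y b k v \is a GRing.unit.
Hypothesis HYp : forall b k v, in_I X b -> (0 < k)%N -> Y b k (v + per) = Y b k v.

Lemma B1_eq i : B1 i = Phi1 B1 i.
Proof. rewrite /B1; apply: fixit_eq => f g j H. exact: Phi1_loc H. Qed.

Lemma onepinv_unit (y : S) : y \is a GRing.unit -> 1 + y \is a GRing.unit ->
  1 + y^-1 \is a GRing.unit.
Proof.
move=> hy h1.
have E : (1 + y) * y^-1 = 1 + y^-1 by rewrite mulrDl mul1r (mulrV hy) addrC.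
by rewrite -E unitrM h1 unitrV.
Qed.

Lemma B1_unit i : B1 i \is a GRing.unit.
Proof.
apply: (@fixit_inv _ _ lev1 Phi1 (fun _ => 1) (fun x => x \is a GRing.unit)); first by move=> _; exact: unitr1.
move=> f Hf [a u]; rewrite /Phi1 /=; case: ifP => Ha; last exact: unitr1.
have HG : forall v, G1 (fun b v => f (b, v)) a v \is a GRing.unit.
  move=> v; rewrite /G1 unitrM; apply/andP; split.
    by apply: Minl_unit => //; move=> b w; apply: Hf.
  by apply: onepinv_unit; [apply: HYu | apply: HY1].
by repeat case: ifP => _; rewrite ?unitr1 // unitrM unitrV HG Hf.
Qed.

Lemma bet_E a u : in_I X a ->
  bet a (u - sX R X a) * bet a (u + sX R X a) = G1 bet a u.
Proof.
move=> Ha; have Hd := dd_bounds X a.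
have uB := B1_unit.
case: (lerP (dd X a) (hg u)) => Hh.
- have E := B1_eq (a, u + sX R X a); rewrite /Phi1 /= Ha hg_add in E.
  move: E; case: ifP => Hw; first by lia.
  case: ifP => Hp; last by lia.
  rewrite addrK => E; rewrite /bet E.
  by rewrite mulrC divrK.
- have E := B1_eq (a, u - sX R X a); rewrite /Phi1 /= Ha hg_sub in E.
  move: E; case: ifP => Hw; first by lia.
  case: ifP => Hp; first by lia.
  rewrite subrK => E; rewrite /bet E.
  by rewrite divrK.
Qed.

Lemma Phi1_shift f a u :
  Phi1 f (a, u + per) = Phi1 (fun j => f (j.1, j.2 + per)) (a, u).
Proof.
rewrite /Phi1 /= hgt_per //; case: ifP => Ha //.
have E1 : forall v, v + per - sX R X a = v - sX R X a + per by move=> v; rewrite addrAC.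
have E2 : forall v, v + per + sX R X a = v + sX R X a + per by move=> v; rewrite addrAC.
rewrite !E1 !E2 (addrAC (u - _)) (addrAC (u + _)).
have HG : forall w, G1 (fun b v => f (b, v)) a (w + per) =
                    G1 (fun b v => f (b, v + per)) a w.
  move=> w; rewrite /G1 HYp //; congr (_ * _); apply: Minl_ext => //.
    by move=> b c _; rewrite addrAC.
  by move=> b k Hb Hk; rewrite HYp.
by rewrite !HG.
Qed.

Lemma bet_per a u : bet a (u + per) = bet a u.
Proof.
rewrite /bet.
have : forall i, B1 (i.1, i.2 + per) = B1 i; last by move=> H; exact: (H (a, u)).
apply: (@lev_ind _ lev1 (fun i => B1 (i.1, i.2 + per) = B1 i)) => -[a' u'] IH /=.
rewrite B1_eq [RHS]B1_eq Phi1_shift; apply: Phi1_loc => j Hj.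
exact: IH.
Qed.

End Stage1.


Arguments Tx : simpl never.
Arguments shift : simpl never.

Lemma lev2_mono X a k m : dynkin_valid X -> in_I X a -> (k < m)%N ->
  (lev2 X a k < lev2 X a m)%N.
Proof.
case: X => [r|r|r|r| | | | |]; rewrite /in_I /lev2 /wl /tnum /tmax /= => Hv Ha Hk;
  repeat case: ifP => ?; rewrite ?divn1 ?divnn /=; lia.
Qed.

Lemma wl_mono X a k m : dynkin_valid X -> in_I X a -> (k < m)%N ->
  (wl X a k < wl X a m)%N.
Proof.
case: X => [r|r|r|r| | | | |]; rewrite /in_I /wl /tnum /tmax /= => Hv Ha Hk;
  repeat case: ifP => ?; rewrite ?divn1 ?divnn /=; lia.
Qed.

Section Stage2.
Variable R : realType.
Local Notation C := R[i].
Variable S : comUnitRingType.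
Variable X : dynkin.
Variable xi : option C.
Variable Y : nat -> nat -> C -> S.
Local Notation per := (period xi).

Hypothesis Hv : dynkin_valid X.
Hypothesis Hs : spectral_ok xi.
Hypothesis HYu : forall b k v, in_I X b -> (0 < k)%N -> Y b k v \is a GRing.unit.
Hypothesis HY1 : forall b k v, in_I X b -> (0 < k)%N -> 1 + Y b k v \is a GRing.unit.
Hypothesis HYp : forall b k v, in_I X b -> (0 < k)%N -> Y b k (v + per) = Y b k v.

Local Notation beta := (bet X xi Y).

Definition lev2' (i : nat * nat * C) : nat := lev2 X i.1.1 i.1.2.
Definition Phi2 (t : nat * nat * C -> S) (i : nat * nat * C) : S :=
  let a := i.1.1 in let m := i.1.2 in let u := i.2 in
  let t' := fun b k v => t (b, k, v) in
  if m == 0%N then 1 else if m == 1%N then beta a u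
  else if in_I X a then Mfun X t' a m.-1 u / (Tx t' a m.-2 u * Y a m.-1 u) else 1.
Definition TT := fixit lev2' Phi2 (fun _ => 1).
Definition tt b k v := TT (b, k, v).

Lemma Phi2_loc f g i : (forall j, (lev2' j < lev2' i)%N -> f j = g j) -> Phi2 f i = Phi2 g i.
Proof.
case: i => [[a m] u] H; rewrite /Phi2 /=.
case: ifP => Hm0 //; case: ifP => Hm1 //; case: ifP => Ha //.
have Hm : (1 < m)%N by move/negbT: Hm0; move/negbT: Hm1; lia.
congr (_ / (_ * _)).
- rewrite !Mfun_ML; apply: eq_big_seq => x Hx.
  have Hm' : (0 < m.-1)%N by lia.
  have := allP (ML_lev R Hv Ha Hm') x Hx.
  have -> : m.-1.+1 = m by lia.
  rewrite /Tx; case: ifP => // /norP [/negbTE E1 /negbTE E2]; rewrite E1 E2 /= => Hl.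
  by apply: H; rewrite /lev2' /=.
- rewrite /Tx; case: ifP => // /norP [_ Hk]; apply: H; rewrite /lev2' /=.
  by apply: lev2_mono => //; lia.
Qed.

Lemma TT_eq i : TT i = Phi2 TT i.
Proof. rewrite /TT; apply: fixit_eq => f g j H. exact: Phi2_loc H. Qed.


Lemma bet_unit b v : beta b v \is a GRing.unit.
Proof. by rewrite /bet; apply: B1_unit. Qed.

Lemma TT_unit i : TT i \is a GRing.unit.
Proof.
apply: (@fixit_inv _ _ lev2' Phi2 (fun _ => 1) (fun x => x \is a GRing.unit));
  first by move=> _; exact: unitr1.
move=> f Hf [[a m] u]; rewrite /Phi2 /=.
case: ifP => Hm0; first exact: unitr1.
case: ifP => Hm1; first exact: bet_unit.
case: ifP => Ha; last exact: unitr1.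
have HM : Mfun X (fun b k v => f (b, k, v)) a m.-1 u \is a GRing.unit.
  by apply: Mfun_unit => // b' k' v' _ _; apply: Hf.
have HY' : Y a m.-1 u \is a GRing.unit.
  by apply: HYu => //; move/negbT: Hm0; move/negbT: Hm1; lia.
have HT' : Tx (fun b k v => f (b, k, v)) a m.-2 u \is a GRing.unit.
  by rewrite /Tx; case: ifP => _; [exact: unitr1 | apply: Hf].
by rewrite unitrM HM unitrV unitrM HY' HT'.
Qed.

Lemma tt_unit b k v : tt b k v \is a GRing.unit.
Proof. exact: TT_unit. Qed.

Lemma tt_one b v : tt b 1 v = beta b v.
Proof. by rewrite /tt TT_eq /Phi2. Qed.

Lemma tt_rec a m u : in_I X a -> (1 < m)%N ->
  tt a m u = Mfun X tt a m.-1 u / (Tx tt a m.-2 u * Y a m.-1 u).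
Proof.
move=> Ha Hm; rewrite /tt TT_eq /Phi2 /= Ha.
case: ifP => [/eqP E|_]; first by move: Hm; rewrite E.
by case: ifP => [/eqP E|_] //; move: Hm; rewrite E.
Qed.

Lemma div_cancel3 (x d y : S) : x \is a GRing.unit -> d \is a GRing.unit ->
  y \is a GRing.unit -> x / (d * (x / (d * y))) = y.
Proof.
move=> ux ud uy.
have udy : d * y \is a GRing.unit by rewrite unitrM ud uy.
have uQ : d * (x / (d * y)) \is a GRing.unit by rewrite unitrM ud unitrM ux unitrV udy.
apply: (mulIr uQ); rewrite divrK //.
have -> : y * (d * (x / (d * y))) = (d * y) * (x / (d * y)) by ring.
by rewrite mulrC divrK.
Qed.

Lemma tt_B a m u : in_I X a -> (0 < m)%N -> yT X tt a m u = Y a m u.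
Proof.
move=> Ha Hm.
have a0 : (0 < a)%N by move: Ha; rewrite /in_I => /andP [].
rewrite /yT [Tx tt a m.+1 u]TxE // tt_rec //=.
apply: div_cancel3; first (apply: Mfun_unit => //; move=> *; exact: tt_unit).
  by rewrite /Tx; case: ifP => _; rewrite ?unitr1 ?tt_unit.
exact: HYu.
Qed.

Lemma Phi2_shift f a m u :
  Phi2 f (a, m, u + per) = Phi2 (fun j => f (j.1.1, j.1.2, j.2 + per)) (a, m, u).
Proof.
rewrite /Phi2 /=; case: ifP => Hm0 //; case: ifP => Hm1.
  by apply: bet_per.
case: ifP => Ha //.
by rewrite Mfun_shift HYp //; move/negbT: Hm0; move/negbT: Hm1; lia.
Qed.

Lemma tt_per b k v : tt b k (v + per) = tt b k v.
Proof.
rewrite /tt.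
have : forall i, TT (i.1.1, i.1.2, i.2 + per) = TT i; last by move=> H; exact: (H (b, k, v)).
apply: (@lev_ind _ lev2' (fun i => TT (i.1.1, i.1.2, i.2 + per) = TT i)) => -[[a m] u] IH /=.
rewrite TT_eq [RHS]TT_eq Phi2_shift; apply: Phi2_loc => j Hj.
exact: IH.
Qed.


Lemma Tx1 b v : Tx tt b 1 v = bx beta b v.
Proof. by rewrite /Tx /bx orbF tt_one. Qed.

Lemma Tx_rec b m v : in_I X b -> (1 < m)%N ->
  Tx tt b m v = Mfun X tt b m.-1 v / (Tx tt b m.-2 v * Y b m.-1 v).
Proof.
move=> Hb Hm; have b0 : (0 < b)%N by move: Hb; rewrite /in_I => /andP [].
by rewrite TxE ?tt_rec //; lia.
Qed.

End Stage2.

Lemma bx_nz (R : realType) (S : comUnitRingType) (f : nat -> R[i] -> S) b v :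
  (b == 0%N) = false -> bx f b v = f b v.
Proof. by rewrite /bx => ->. Qed.

Lemma inline (R : realType) (S : comUnitRingType) X (xi : option R[i]) (Y : nat -> nat -> R[i] -> S) (Hv : dynkin_valid X) a u : in_I X a ->
  Mfun X (tt X xi Y) a 1 u = Minl Y X (bet X xi Y) a u.
Proof.
move=> Ha.
have T1 := Tx1 xi Y Hv.
have TR := Tx_rec xi Y Hv.
have e2 : (1.*2 = 2)%N by [].
have e3 : (3 * 1 = 3)%N by [].
have e4 : (2 %% 3 = 2)%N by [].
have e5 : (2 %/ 3 = 0)%N by [].
move: Hv Ha T1 TR.
case: X => [r|r|r|r| | | | |] Hv Ha T1 TR;
  try (rewrite /Mfun /Minl; cbv beta iota zeta; rewrite big_seq_cond [RHS]big_seq_cond;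
       apply: eq_bigr => b; rewrite mem_iota => /andP [Hb _]; rewrite T1 /bx; case: ifP => //; lia).
all: rewrite /in_I /= in Ha Hv.
all: rewrite /Mfun /Minl; cbv beta iota zeta; repeat (case: ifP => ?); rewrite ?Txa0 ?T1 ?e2 ?e3.
all: try (rewrite TR ?/in_I /=; [ | lia | by []]).
all: repeat (case: ifP => ?); try (exfalso; lia).
all: rewrite ?e4 ?e5 ?Txa0 ?T1.
all: rewrite ?mul1r ?mulr1 //.
all: rewrite ?[bx _ (r - 1)%N _]bx_nz ?[bx _ r _]bx_nz ?[bx _ 1%N _]bx_nz ?[bx _ 2%N _]bx_nz
  ?[bx _ 3%N _]bx_nz ?[bx _ 4%N _]bx_nz; try lia.
all: rewrite ?mul1r ?mulr1 //.
Qed.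


Arguments Tx : simpl never.
Arguments shift : simpl never.

Section Stage3.
Variable R : realType.
Local Notation C := R[i].
Variable S : comUnitRingType.
Variable X : dynkin.
Variable xi : option C.
Variable Y : nat -> nat -> C -> S.
Local Notation per := (period xi).

Hypothesis Hv : dynkin_valid X.
Hypothesis Hs : spectral_ok xi.
Hypothesis HYu : forall b k v, in_I X b -> (0 < k)%N -> Y b k v \is a GRing.unit.
Hypothesis HY1 : forall b k v, in_I X b -> (0 < k)%N -> 1 + Y b k v \is a GRing.unit.
Hypothesis HYp : forall b k v, in_I X b -> (0 < k)%N -> Y b k (v + per) = Y b k v.
Hypothesis HYs : forall a m u, in_I X a -> (0 < m)%N ->
  Y a m (u - shift R (tnum X a)) * Y a m (u + shift R (tnum X a)) =
  Nfun X Y a m u / ((1 + Yinvx Y a m.-1 u) * (1 + Yinvx Y a m.+1 u)).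

Local Notation t := (tt X xi Y).

Lemma TU : Tunits X t.
Proof. by move=> b k v _ _; apply: (tt_unit xi Hv HYu HY1). Qed.

Lemma good_base a u : in_I X a -> goodT X t a 1 u.
Proof.
move=> Ha; rewrite /goodT !(tt_one xi Y Hv) (bet_E Hv Hs HYu HY1) // Txa0.
rewrite (Tx_rec xi Y Hv) //= Txa0 (inline xi Y Hv) // /G1.
by rewrite !mul1r; ring.
Qed.

Lemma good_all a m u : in_I X a -> (0 < m)%N -> goodT X t a m u.
Proof.
have : forall p : nat * nat, in_I X p.1 -> (0 < p.2)%N -> forall u, goodT X t p.1 p.2 u;
  last by move=> H Ha Hm; exact: (H (a, m)).
apply: (@lev_ind _ (fun p => wl X p.1 p.2)
          (fun p => in_I X p.1 -> (0 < p.2)%N -> forall u, goodT X t p.1 p.2 u)).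
move=> [a' m'] IH /= Ha Hm u'.
case: m' Hm IH => [//|[|n]] _ IH; first exact: good_base.
have Hn : (0 < n.+1)%N by [].
apply: (Kfwd Hv Ha Hn TU).
- move=> x Hx Hb.
  have := allP (NL_range R Hv Ha Hn) x Hx; rewrite (negbTE Hb) /= => /andP [Hb' Hk].
  have := allP (NL_w R Hv Ha Hn) x Hx; rewrite (negbTE Hb) /= => Hw.
  exact: (IH (x.1.1, x.1.2)).
- move=> Hm1.
  have Hlev : (wl X a' n < wl X a' n.+2)%N by apply: wl_mono => //; lia.
  have Hn0 : (0 < n)%N by lia.
  exact: (IH (a', n) Hlev Ha Hn0 u').
- rewrite /Yinvx /= (tt_B xi Hv HYu HY1) //; apply: onepinv_unit; [apply: HYu | apply: HY1] => //.
- have E := HYs u' Ha Hn.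
  rewrite !(tt_B xi Hv HYu HY1) //.
  rewrite (Nfun_congr (Y' := Y)) //; last by move=> b k v Hb Hk; rewrite (tt_B xi Hv HYu HY1).
  rewrite E /Yinvx /= (tt_B xi Hv HYu HY1 (m := n.+2)) //.
  case: ifP => Hn0 //; rewrite (tt_B xi Hv HYu HY1 (m := n)) //; lia.
Qed.

End Stage3.


Arguments Tx : simpl never.
Arguments shift : simpl never.

Lemma Tx_per (R : realType) (S : comUnitRingType) X (per : R[i]) (T : nat -> nat -> R[i] -> S) b k u :
  (forall b k v, in_I X b -> (0 < k)%N -> T b k (v + per) = T b k v) ->
  ((b == 0%N) || in_I X b) -> Tx T b k (u + per) = Tx T b k u.
Proof.
move=> HP Hb; rewrite /Tx; case: ifP => // /norP [/negbTE Hb0 Hk].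
by rewrite Hb0 /= in Hb; rewrite HP //; case: (k) Hk.
Qed.

Lemma Yrel_of_Trel (R : realType) (S : comUnitRingType) X (per : R[i]) (T : nat -> nat -> R[i] -> S) :
  dynkin_valid X -> T_rel X per T -> Y_rel X per (yT X T).
Proof.
move=> Hv [HTu HTp HTg].
have TU : Tunits X T by [].
have uTx : forall b k v, in_I X b -> Tx T b k v \is a GRing.unit.
  by move=> b k v Hb; rewrite (TxU _ _ TU) // Hb orbT.
have a0 : forall a, in_I X a -> (0 < a)%N by move=> a; rewrite /in_I => /andP [].
split.
- move=> a m u Ha Hm; rewrite /yT; apply: unit_div; first exact: Mfun_unit.
  by rewrite unitrM !uTx.
- move=> a m u Ha Hm.
  have E := D1_entry (t := T) (b := a) (k := m) (v := u) TU (or_intror (And3 Ha Hm (HTg a m u Ha Hm))).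
  have : (1 + Yx (yT X T) a m u) * (Tx T a m.-1 u * Tx T a m.+1 u) \is a GRing.unit.
    by rewrite E unitrM !uTx.
  rewrite unitrM /Yx; case: eqP => [E0|_]; first by move: (a0 a Ha); rewrite E0.
  by case/andP.
- move=> a m u Ha Hm; rewrite /yT Mfun_shift !(Tx_per _ _ HTp) ?Ha ?orbT //.
  congr (_ / _); apply: Mfun_congr => // b k v Hb Hk; exact: HTp.
- move=> a m u Ha Hm; apply: Kbwd => //.
  + by move=> x Hx Hb; have := allP (NL_range R Hv Ha Hm) x Hx; rewrite (negbTE Hb) /= => /andP [? ?];
       apply: HTg.
  + by move=> Hm1; apply: HTg => //; lia.
  + exact: HTg.
Qed.

Theorem theorem2p12 (R : realType) (X : dynkin) (xi : option R[i])
  (RT : comUnitRingType) (T : nat -> nat -> R[i] -> RT)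
  (RY : comUnitRingType) (Y : nat -> nat -> R[i] -> RY) :
  dynkin_valid X -> spectral_ok xi ->
  T_presented X (period xi) T -> Y_presented X (period xi) Y ->
  exists phi : {rmorphism RY -> RT},
    (forall a m u, in_I X a -> (0 < m)%N ->
       phi (Y a m u) = Mfun X T a m u / (Tx T a m.-1 u * Tx T a m.+1 u)) /\
    (exists psi : {rmorphism RT -> RY}, forall y, psi (phi y) = y) /\
    (exists f : {rmorphism RY -> RT}, injective f) /\
    (exists g : {rmorphism RT -> RY}, forall x, exists z, g z = x).
Proof.
move=> Hv Hs [HTrel HTuniv] [HYrel HYuniv].
have HYR := Yrel_of_Trel Hv HTrel.
have [phi [Hphi _]] := HYuniv RT (yT X T) HYR.
have HYrel' := HYrel; case: HYrel' => HYu HY1 HYp HYs.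
set t := tt X xi Y.
have HTt : T_rel X (period xi) t.
  split.
  - by move=> a m u _ _; apply: (tt_unit xi Hv HYu HY1).
  - by move=> a m u _ _; apply: (tt_per Hv Hs HYp).
  - by move=> a m u Ha Hm; apply: (good_all Hv Hs HYu HY1 HYs).
have [psi [Hpsi _]] := HTuniv RY t HTt.
have [f [Hf Huniq]] := HYuniv RY Y HYrel.
have HTu : forall b k v, in_I X b -> (0 < k)%N -> T b k v \is a GRing.unit by case: HTrel.
have psiTx : forall b k v, in_I X b -> psi (Tx T b k v) = Tx t b k v.
  move=> b k v Hb; rewrite /Tx; case: ifP => H; first exact: rmorph1.
  by apply: Hpsi => //; case/norP: H => _; case: (k).
have comp : forall y, psi (phi y) = y.
  have H1 : (psi \o phi) =1 f.
    apply: Huniq => a m u Ha Hm /=.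
    rewrite Hphi // rmorphM rmorphV; last by rewrite unitrM !(TxU _ _ HTu) // Ha orbT.
    rewrite rmorphM !psiTx // Mfun_rmorph.
    have HM : Mfun X (fun b k v => psi (T b k v)) a m u = Mfun X t a m u.
      by apply: Mfun_congr => // b k v Hb Hk; apply: Hpsi.
    rewrite HM; exact: (tt_B xi Hv HYu HY1).
  have H2 : (@idfun RY) =1 f by apply: Huniq.
  by move=> y; rewrite -[psi (phi y)]/((psi \o phi) y) H1 -H2.
exists phi; split => //; split; first by exists psi.
split; first by exists phi; apply: (can_inj comp).
by exists psi => x; exists (phi x); apply: comp.
Qed.
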